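(* Let $Z\in\{0,1\}$ be a treatment variable and $X$ pre-treatment covariates with distribution $\mathcal{Q}$. Let $\mathcal{P}(Z=1\mid X)$ be the true conditional treatment-assignment model and $\mathcal{P}'(Z=1\mid X)$ an approximation of it produced by logistic regression. Let $\delta=\int_X\mathcal{Q}(X)\mathcal{P}(Z=1\mid X)\,dX$ and $\delta'=\int_X\mathcal{Q}(X)\mathcal{P}'(Z=1\mid X)\,dX$, and let $\mathcal{Q}\mathcal{P}$ (resp. $\mathcal{Q}\mathcal{P}'$) denote the distribution of $X$ given $Z=1$ when $X\sim\mathcal{Q}$ and $Z$ is assigned according to $\mathcal{P}$ (resp. $\mathcal{P}'$), i.e. with density $\mathcal{Q}(x)\mathcal{P}(Z=1\mid x)/\delta$ (resp. $\mathcal{Q}(x)\mathcal{P}'(Z=1\mid x)/\delta'$). Let $f$ be any function of $X$ with $0\le f(x)\le M$ for all $x$, for a fixed constant $M$. For $0\le\epsilon,\gamma\le1$, if $\mathbb{E}_{X\sim\mathcal{Q}}\left(|\mathcal{P}(Z=1\mid X)-\mathcal{P}'(Z=1\mid X)|\right)\le\epsilon$ and $\mathbb{E}_{X\sim\mathcal{Q}\mathcal{P}}(f(X))\le\gamma M$, then $$\mathbb{E}_{X\sim\mathcal{Q}\mathcal{P}'}(f(X))\le\left(\frac{\epsilon}{\delta}+\gamma\right)\left(\frac{\delta}{\delta-\epsilon}\right)M.$$ *)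

(* Defs.v *)
From HB Require Import structures.
From mathcomp Require Import all_boot all_order all_algebra.
From mathcomp Require Import all_classical all_reals all_analysis.
Set Implicit Arguments. Unset Strict Implicit. Unset Printing Implicit Defensive.
Import Order.TTheory GRing.Theory Num.Theory.
Local Open Scope ring_scope.
Local Open Scope classical_set_scope.

Definition treat_prob d (T : measurableType d) (R : realType)
  (Q : probability T R) (p : T -> R) : R :=
  Rintegral Q setT p.

(* E_{X ~ QP}(f(X)) where QP has density Q(x) p(x) / delta_p. *)
Definition cond_expect d (T : measurableType d) (R : realType)
  (Q : probability T R) (p f : T -> R) : R :=
  Rintegral Q setT (fun x => f x * p x) / treat_prob Q p.

(* Main.v *)
Require Import Defs.
From HB Require Import structures.
From mathcomp Require Import all_boot all_order all_algebra.
From mathcomp Require Import all_classical all_reals all_analysis.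
From mathcomp Require Import measurable_realfun ring lra.
Import Order.TTheory GRing.Theory Num.Theory.
Local Open Scope ring_scope.
Local Open Scope classical_set_scope.

Lemma bnd_int d (T : measurableType d) (R : realType) (Q : probability T R) (g : T -> R) (K : R) :
  measurable_fun setT g -> (forall x, `|g x| <= K) -> Q.-integrable setT (EFin \o g).
Proof.
move=> mg gK.
apply: (le_integrable _ _ _ (finite_measure_integrable_cst Q K measurableT)) => //.
- exact/measurable_EFinP.
- move=> x _ /=; rewrite lee_fin (le_trans (gK x)) //.
  exact: ler_norm.
Qed.

Theorem lemma20 (d : measure_display) (T : measurableType d) (R : realType)
  (Q : probability T R) (p p' f : T -> R) (M eps gamma : R)
  (mp : measurable_fun setT p) (mp' : measurable_fun setT p')
  (mf : measurable_fun setT f)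
  (p01 : forall x, 0 <= p x <= 1) (p'01 : forall x, 0 <= p' x <= 1)
  (f0M : forall x, 0 <= f x <= M)
  (eps01 : 0 <= eps <= 1) (gamma01 : 0 <= gamma <= 1)
  (heps : Rintegral Q setT (fun x => `|p x - p' x|) <= eps)
  (hgamma : cond_expect Q p f <= gamma * M)
  (hdelta : eps < treat_prob Q p) :
  cond_expect Q p' f <=
    (eps / treat_prob Q p + gamma)
    * (treat_prob Q p / (treat_prob Q p - eps)) * M.
Proof.
move: hgamma; rewrite /cond_expect.
set dl := treat_prob Q p; set dl' := treat_prob Q p'.
set A := Rintegral Q setT (fun x => f x * p x).
set A' := Rintegral Q setT (fun x => f x * p' x).
set I := Rintegral Q setT (fun x => `|p x - p' x|).
move=> hg; have hd : eps < dl := hdelta; have he : I <= eps := heps.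
have eps0 : 0 <= eps by case/andP: eps01.
have M0 : 0 <= M.
  case: (leP 0 M) => // Mlt; exfalso.
  have : dl = 0.
    rewrite /dl /treat_prob (@eq_Rintegral _ _ _ Q _ (fun=> 0)).
      by rewrite Rintegral_cst // mul0r.
    by move=> x _; have := f0M x => /andP[? ?]; lra.
  lra.
have ip : Q.-integrable setT (EFin \o p).
  apply: (@bnd_int _ _ _ Q _ 1) => // x; have := p01 x; move=> /andP[? ?]; rewrite ger0_norm; lra.
have ip' : Q.-integrable setT (EFin \o p').
  apply: (@bnd_int _ _ _ Q _ 1) => // x; have := p'01 x; move=> /andP[? ?]; rewrite ger0_norm; lra.
have mD : measurable_fun setT (fun x => `|p x - p' x|).
  by apply: measurableT_comp => //; exact: measurable_funB.
have iD : Q.-integrable setT (EFin \o (fun x => `|p x - p' x|)).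
  apply: (@bnd_int _ _ _ Q _ 1) => // x; have := p01 x; have := p'01 x.
  rewrite normr_id; move=> /andP[? ?] /andP[? ?].
  rewrite ler_norml; apply/andP; split; lra.
have ifp : Q.-integrable setT (EFin \o (fun x => f x * p x)).
  apply: (@bnd_int _ _ _ Q _ M); first exact: measurable_funM.
  move=> x; have := p01 x; have := f0M x => /andP[? ?] /andP[? ?].
  rewrite ger0_norm; [nra | nra].
have ifp' : Q.-integrable setT (EFin \o (fun x => f x * p' x)).
  apply: (@bnd_int _ _ _ Q _ M); first exact: measurable_funM.
  move=> x; have := p'01 x; have := f0M x => /andP[? ?] /andP[? ?].
  rewrite ger0_norm; [nra | nra].
have iMD : Q.-integrable setT (EFin \o (fun x => M * `|p x - p' x|)).
  apply: (@bnd_int _ _ _ Q _ M); first exact: measurable_funM.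
  move=> x; have := p01 x; have := p'01 x => /andP[? ?] /andP[? ?].
  rewrite normrM normr_id (ger0_norm M0).
  have : `|p x - p' x| <= 1 by rewrite ler_norml; apply/andP; split; lra.
  nra.
have ipD : Q.-integrable setT (EFin \o (fun x => p' x + `|p x - p' x|)).
  apply: (@bnd_int _ _ _ Q _ 2); first exact: measurable_funD.
  move=> x; have := p01 x; have := p'01 x => /andP[? ?] /andP[? ?].
  have : `|p x - p' x| <= 1 by rewrite ler_norml; apply/andP; split; lra.
  have := normr_ge0 (p x - p' x).
  move=> ? ?; rewrite ler_norml; apply/andP; split; lra.
have ifpD : Q.-integrable setT (EFin \o (fun x => f x * p x + M * `|p x - p' x|)).
  apply: (@bnd_int _ _ _ Q _ (M + M)).
    by apply: measurable_funD; [exact: measurable_funM | exact: measurable_funM].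
  move=> x; have := p01 x; have := p'01 x; have := f0M x => /andP[? ?] /andP[? ?] /andP[? ?].
  have : `|p x - p' x| <= 1 by rewrite ler_norml; apply/andP; split; lra.
  have := normr_ge0 (p x - p' x).
  move=> ? ?; rewrite ler_norml; apply/andP; split; nra.
have h1 : A' <= A + M * I.
  rewrite /A /I -RintegralZl // -RintegralD //.
  apply: le_Rintegral => // x _.
  have := p01 x; have := p'01 x; have := f0M x => /andP[? ?] /andP[? ?] /andP[? ?].
  have e0 : p' x - p x <= `|p x - p' x| by rewrite distrC ler_norm.
  have e1 : f x * (p' x - p x) <= f x * `|p x - p' x| by rewrite ler_wpM2l.
  have e2 : f x * `|p x - p' x| <= M * `|p x - p' x| by rewrite ler_wpM2r.
  nra.
have h2 : dl <= dl' + I.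
  rewrite /dl /dl' /I /treat_prob -RintegralD //.
  apply: le_Rintegral => // x _.
  have : p x - p' x <= `|p x - p' x| by rewrite ler_norm.
  lra.
have A'0 : 0 <= A'.
  apply: Rintegral_ge0 => x _; have := p'01 x; have := f0M x => /andP[? ?] /andP[? ?].
  nra.
have I0 : 0 <= I by apply: Rintegral_ge0.
have dl0 : 0 < dl by lra.
have hA : A <= gamma * M * dl by rewrite -ler_pdivrMr.
have dl'0 : 0 < dl' by nra.
set K := (eps / dl + gamma) * (dl / (dl - eps)) * M.
have hK : K * (dl - eps) = (eps + gamma * dl) * M.
  rewrite /K; field; apply/andP; split; apply/eqP; lra.
have K0 : 0 <= K.
  rewrite /K; apply: mulr_ge0 => //; apply: mulr_ge0.
    by apply: addr_ge0; [apply: divr_ge0; lra | case/andP: gamma01].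
  apply: divr_ge0; lra.
rewrite ler_pdivrMr //.
nra.
Qed.
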